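(* Let $T$ be a valid set such that there is a unique pair $(\alpha',\beta')\in T$ with $\gamma_{\alpha',\beta'}=\Gamma_T$. Then $n^{-1}|\mathcal{E}_T(\{(\alpha',\beta')\})\cap[n]|\to1$ as $n\to\infty$; that is, almost every $n$ has $\mathcal{S}_T(n)=\{(\alpha',\beta')\}$.
   Context: For relatively prime positive integers $\alpha,\beta$ and positive integers $a_1,a_2$, the $(\alpha,\beta)$-walk $w^{\alpha,\beta}_k(a_1,a_2)$ is given by $w_1=a_1$, $w_2=a_2$, $w_{k+2}=\alpha w_{k+1}+\beta w_k$ ($k\ge1$). For a positive integer $n$, $s^{\alpha,\beta}(n;a_1,a_2)$ is the (largest) index $s$ with $w^{\alpha,\beta}_s(a_1,a_2)=n$ ($-\infty$ if none), and $s^{\alpha,\beta}(n)=\max_{a_1,a_2\ge1}s^{\alpha,\beta}(n;a_1,a_2)$. $\gamma_{\alpha,\beta}=\frac12(\alpha+\sqrt{\alpha^2+4\beta})$. A set $T$ is valid if $T\subseteq\{(\alpha,\beta):\alpha,\beta\ge1,\gcd(\alpha,\beta)=1\}$. For valid $T$: $\bar s_T(n)=\max_{(\alpha,\beta)\in T}s^{\alpha,\beta}(n)$, $\mathcal{S}_T(n)=\{(\alpha,\beta)\in T:s^{\alpha,\beta}(n)=\bar s_T(n)\}$, $\Gamma_T=\min\{\gamma_{\alpha,\beta}:(\alpha,\beta)\in T\}$, and for a set $S$ of pairs $\mathcal{E}_T(S)=\{n\ge1:S=\mathcal{S}_T(n)\}$. $[n]=\{1,\dots,n\}$. *)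

(* Defs.v *)
From HB Require Import structures.
From mathcomp Require Import all_boot all_order all_algebra.
From mathcomp Require Import all_classical all_reals all_analysis.
Set Implicit Arguments. Unset Strict Implicit. Unset Printing Implicit Defensive.
Import Order.TTheory GRing.Theory Num.Theory.

(* (w_{k+1}, w_{k+2}) of the (alpha,beta)-walk starting at a1, a2. *)
Fixpoint walk_pair (alpha beta a1 a2 : nat) (k : nat) : nat * nat :=
  match k with
  | 0 => (a1, a2)
  | k'.+1 => let: (x, y) := walk_pair alpha beta a1 a2 k' in
             (y, (alpha * y + beta * x)%N)
  end.

(* walk alpha beta a1 a2 k = w^{alpha,beta}_k(a1,a2) for k >= 1
   (w_1 = a1, w_2 = a2, w_{k+2} = alpha w_{k+1} + beta w_k). *)
Definition walk (alpha beta a1 a2 k : nat) : nat :=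
  (walk_pair alpha beta a1 a2 k.-1).1.

(* is_s alpha beta n m  :<->  s^{alpha,beta}(n) = m, i.e. m is the largest
   index k >= 1 such that w_k(a1,a2) = n for some a1, a2 >= 1. *)
Definition is_s (alpha beta n m : nat) : Prop :=
  (exists a1 a2, [/\ 1 <= a1, 1 <= a2, 1 <= m & walk alpha beta a1 a2 m = n])
  /\ (forall a1 a2 k, 1 <= a1 -> 1 <= a2 -> 1 <= k ->
        walk alpha beta a1 a2 k = n -> k <= m)%N.

Definition valid (T : set (nat * nat)) : Prop :=
  forall p, T p -> [/\ 1 <= p.1, 1 <= p.2 & coprime p.1 p.2]%N.

(* is_sbar T n m  :<->  \bar s_T(n) = m  (max over T of s^{alpha,beta}(n)). *)
Definition is_sbar (T : set (nat * nat)) (n m : nat) : Prop :=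
  (exists p, T p /\ is_s p.1 p.2 n m)
  /\ (forall p m', T p -> is_s p.1 p.2 n m' -> m' <= m)%N.

Definition in_S (T : set (nat * nat)) (n : nat) (p : nat * nat) : Prop :=
  T p /\ exists m, is_sbar T n m /\ is_s p.1 p.2 n m.

Definition in_E (T : set (nat * nat)) (S : set (nat * nat)) (n : nat) : Prop :=
  (1 <= n)%N /\ (forall p, S p <-> in_S T n p).

Definition gamma {R : realType} (p : nat * nat) : R :=
  (p.1%:R + Num.sqrt (p.1%:R ^+ 2 + 4 * p.2%:R)) / 2.

Definition count_E (T S : set (nat * nat)) (n : nat) : nat :=
  (\sum_(1 <= i < n.+1 | `[< in_E T S i >]) 1)%N.

(* Main.v *)
Require Import Defs.
From HB Require Import structures.
From mathcomp Require Import all_boot all_order all_algebra.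
From mathcomp Require Import all_classical all_reals all_analysis.
From mathcomp Require Import zify ring lra.
Import Order.TTheory GRing.Theory Num.Theory.
Import numFieldNormedType.Exports.
Local Open Scope classical_set_scope.

Section Walk.
Variables (al be : nat).

Definition wp (a1 a2 j : nat) : nat := (walk_pair al be a1 a2 j).1.

Lemma wp_snd a1 a2 j : (walk_pair al be a1 a2 j).2 = wp a1 a2 j.+1.
Proof. by rewrite /wp /=; case: (walk_pair _ _ _ _ _). Qed.

Lemma wp0 a1 a2 : wp a1 a2 0 = a1. Proof. by []. Qed.
Lemma wp1 a1 a2 : wp a1 a2 1 = a2. Proof. by []. Qed.

Lemma wpSS a1 a2 j : wp a1 a2 j.+2 = (al * wp a1 a2 j.+1 + be * wp a1 a2 j)%N.
Proof.
rewrite {1}/wp /= -!wp_snd /wp /=.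
by case: (walk_pair _ _ _ _ _).
Qed.

Lemma walk_pairS a1 a2 j : walk_pair al be a1 a2 j.+1 =
  let: (x, y) := walk_pair al be a1 a2 j in (y, (al * y + be * x)%N).
Proof. by []. Qed.

Lemma walk_pair_shift a1 a2 j :
  walk_pair al be a1 a2 j.+1 = walk_pair al be a2 (al * a2 + be * a1) j.
Proof.
elim: j => [|j IH] //.
by rewrite (walk_pairS _ _ j.+1) IH.
Qed.

Lemma wp_shift a1 a2 j : wp a1 a2 j.+1 = wp a2 (al * a2 + be * a1) j.
Proof. by rewrite /wp walk_pair_shift. Qed.

Lemma wp_lin a1 a2 j : wp a1 a2 j = (a1 * wp 1 0 j + a2 * wp 0 1 j)%N.
Proof.
suff: wp a1 a2 j = (a1 * wp 1 0 j + a2 * wp 0 1 j)%N /\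
      wp a1 a2 j.+1 = (a1 * wp 1 0 j.+1 + a2 * wp 0 1 j.+1)%N by case.
elim: j => [|j [IH1 IH2]]; first by rewrite !wp0 !wp1; split; lia.
split=> //; rewrite !wpSS IH1 IH2; lia.
Qed.

Lemma wpU_S j : wp 1 0 j.+1 = (be * wp 0 1 j)%N.
Proof. by rewrite wp_shift wp_lin; lia. Qed.
Lemma wpV_S j : wp 0 1 j.+1 = (wp 1 0 j + al * wp 0 1 j)%N.
Proof. by rewrite wp_shift wp_lin; lia. Qed.

Lemma wp_mono a1 a2 b1 b2 j : (a1 <= b1)%N -> (a2 <= b2)%N -> (wp a1 a2 j <= wp b1 b2 j)%N.
Proof. move=> h1 h2; rewrite (wp_lin a1) (wp_lin b1); nia. Qed.


Hypothesis (hal : (1 <= al)%N) (hbe : (1 <= be)%N).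

Lemma wp_ge_j a1 a2 j : (1 <= a1)%N -> (1 <= a2)%N -> (j <= wp a1 a2 j)%N.
Proof.
move=> h1 h2.
suff: (j <= wp a1 a2 j)%N /\ (1 <= wp a1 a2 j)%N /\ (j.+1 <= wp a1 a2 j.+1)%N by case.
elim: j => [|j [IH1 [IH2 IH3]]]; first by rewrite wp0 wp1; lia.
split => //; split; first lia.
rewrite wpSS; nia.
Qed.

Hypothesis cop : coprime al be.

Lemma wp_coprime j : (1 <= j)%N -> coprime (wp 1 0 j) (wp 0 1 j).
Proof.
move=> hj.
suff: [/\ coprime (wp 1 0 j) (wp 0 1 j), coprime be (wp 0 1 j) & (be %| wp 1 0 j)%N] by case.
elim: j hj => [//|j IH _].
case: j IH => [_|j IH].
  by rewrite !wp1; split; [done | rewrite /coprime gcdn1 | exact: dvdn0].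
have [c1 c2 c3] := IH isT.
have c4 : coprime be (wp 0 1 j.+2).
  rewrite (wpV_S j.+1); case/dvdnP: c3 => k ->.
  by rewrite /coprime gcdnMDl -/(coprime _ _) coprimeMr (coprime_sym be al) cop.
split => //; last by rewrite wpU_S dvdn_mulr.
rewrite wpU_S coprimeMl c4 /=.
by rewrite (wpV_S j.+1) /coprime addnC gcdnMDl -/(coprime _ _) coprime_sym.
Qed.

End Walk.

Lemma sylvester U V n : 0 < U -> 0 < V -> coprime U V -> U * V < n ->
  exists a1 a2, [/\ 0 < a1, 0 < a2 & a1 * U + a2 * V = n].
Proof.
move=> hU hV cop hn.
case: (egcdnP V hU) => km kn hk _.
move: cop hk; rewrite /coprime => /eqP -> hk.
have hkm : 0 < km by case: km hk => //=; lia.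
set t := n * km - 1.
have ht := divn_eq t V.
have hr := ltn_pmod t hV.
set q := t %/ V in ht; set r := t %% V in ht hr.
have E : (r.+1) * U + q * U * V = n + n * kn * V.
  have e1 : t.+1 = n * km by rewrite /t; nia.
  have : r.+1 * U + q * V * U = n * km * U by rewrite -e1 ht; nia.
  move=> e2; have e3 : n * km * U = n * (kn * V + 1) by rewrite -hk mulnA. nia.
have h1 : r.+1 * U <= U * V by nia.
exists r.+1, (q * U - n * kn); split => //; nia.
Qed.

Lemma sum_ge_term m k i0 (F : nat -> nat) : m <= i0 < k -> F i0 <= \sum_(m <= i < k) F i.
Proof.
case/andP => h1 h2.
rewrite (@big_cat_nat _ _ _ i0) /= ?h1 ?(ltnW h2) // (big_ltn h2) /=.
by rewrite addnCA leq_addr.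
Qed.

Lemma sum_eq_le1 (c : nat) (s : seq nat) : uniq s -> \sum_(i <- s) (c == i : nat) <= 1.
Proof.
move=> us; rewrite -big_mkcond /= sum1_count.
rewrite (@eq_count _ _ (pred1 c)); last by move=> x /=; rewrite eq_sym.
by rewrite count_uniq_mem // leq_b1.
Qed.

Lemma cnt_bound (U V N : nat) : 0 < U -> 0 < V ->
  \sum_(1 <= n < N.+1 | `[< exists a1 a2, [/\ 1 <= a1, 1 <= a2 & a1 * U + a2 * V = n] >]) 1
  <= (N %/ U) * (N %/ V).
Proof.
move=> hU hV.
apply: (@leq_trans (\sum_(1 <= n < N.+1) \sum_(1 <= a < (N %/ U).+1)
          \sum_(1 <= b < (N %/ V).+1) (a * U + b * V == n : nat))).
  rewrite big_mkcond /=; rewrite big_nat [X in _ <= X]big_nat; apply: leq_sum => n /andP [n1 nN].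
  case: asboolP => // [[a [b [a1 b1 e]]]].
  apply: leq_trans (sum_ge_term 1 _ a (fun a => \sum_(1 <= b < (N %/ V).+1) (a * U + b * V == n : nat)) _) => /=.
    apply: leq_trans (sum_ge_term 1 _ b (fun b => (a * U + b * V == n : nat)) _) => /=.
      by rewrite e eqxx.
    rewrite b1 ltnS leq_divRL //; lia.
  rewrite a1 ltnS leq_divRL //; lia.
rewrite exchange_big /=.
apply: (@leq_trans (\sum_(1 <= a < (N %/ U).+1) \sum_(1 <= b < (N %/ V).+1) 1)).
  apply: leq_sum => a _; rewrite exchange_big /=; apply: leq_sum => b _.
  by apply: sum_eq_le1; apply: iota_uniq.
by rewrite !sum_nat_const_nat !subn1 /= muln1.
Qed.

Set Implicit Arguments. Unset Strict Implicit.

Definition hit (p : nat * nat) (n j : nat) : Prop :=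
  exists a1 a2, [/\ (1 <= a1)%N, (1 <= a2)%N & wp p.1 p.2 a1 a2 j = n].

Lemma hit_down p n j : (1 <= p.1)%N -> (1 <= p.2)%N -> hit p n j.+1 -> hit p n j.
Proof.
move=> h1 h2 [a1 [a2 [b1 b2 e]]]; rewrite wp_shift in e.
exists a2, (p.1 * a2 + p.2 * a1)%N; split => //; nia.
Qed.

Lemma hit_le p n j i : (1 <= p.1)%N -> (1 <= p.2)%N -> (j <= i)%N -> hit p n i -> hit p n j.
Proof.
move=> h1 h2; elim: i => [|i IH]; first by rewrite leqn0 => /eqP ->.
rewrite leq_eqVlt => /orP [/eqP -> //|]; rewrite ltnS => hji hi.
by apply: IH => //; apply: hit_down.
Qed.

Lemma hit_bound p n j : (1 <= p.1)%N -> (1 <= p.2)%N -> hit p n j -> (j <= n)%N.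
Proof. by move=> h1 h2 [a1 [a2 [b1 b2 <-]]]; apply: wp_ge_j. Qed.

Lemma is_s_hit p n m : is_s p.1 p.2 n m -> (1 <= m)%N /\ hit p n m.-1.
Proof.
case=> [[a1 [a2 [h1 h2 h3 e]]] _]; split => //; by exists a1, a2.
Qed.

Lemma good_inE (T : set (nat * nat)) (p' : nat * nat) (n j : nat) :
  valid T -> T p' -> (1 <= n)%N -> hit p' n j ->
  (forall q, T q -> q <> p' -> ~ hit q n j) -> in_E T [set p'] n.
Proof.
move=> vT Tp n1 hp hq.
have [v1 v2 _] := vT _ Tp.
have ex : exists k, `[< hit p' n k >] by exists j; apply/asboolP.
have bnd : forall k, `[< hit p' n k >] -> (k <= n)%N.
  by move=> k /asboolP; apply: hit_bound.
case: (ex_maxnP ex bnd) => m /asboolP hm mmax.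
have hjm : (j <= m)%N by apply: mmax; apply/asboolP.
have isp : is_s p'.1 p'.2 n m.+1.
  split.
    case: hm => a1 [a2 [b1 b2 e]]; exists a1, a2; split => //.
  move=> a1 a2 k b1 b2 k1 e.
  have : (k.-1 <= m)%N by apply: mmax; apply/asboolP; exists a1, a2; split.
  lia.
have isq : forall q m', T q -> q <> p' -> is_s q.1 q.2 n m' -> (m' <= j)%N.
  move=> q m' Tq nq /is_s_hit [m1 hq'].
  have [w1 w2 _] := vT _ Tq.
  case: (leqP m' j) => // hlt.
  exfalso; apply: (hq q Tq nq). apply: (hit_le w1 w2 _ hq'); lia.
have sbar : is_sbar T n m.+1.
  split; first by exists p'.
  move=> p m' Tp0 hs.
  case: (eqVneq p p') => [ep|np].
    subst p; have [m1 hh] := is_s_hit hs.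
    have : (m'.-1 <= m)%N by apply: mmax; apply/asboolP.
    lia.
  have := isq p m' Tp0 (fun e => (negP np) (introT eqP e)) hs.
  lia.
split => // p; split.
  by move=> ->; split => //; exists m.+1.
case=> Tp0 [m'' [[_ hsb] hs]].
case: (eqVneq p p') => [-> //|np].
have h1 := isq p m'' Tp0 (fun e => (negP np) (introT eqP e)) hs.
have h2 := hsb p' m.+1 Tp isp.
exfalso; lia.
Qed.

Unset Implicit Arguments. Set Strict Implicit.

Local Open Scope ring_scope.

Section Gam.
Variables (R : realType) (al be : nat).
Hypothesis (hal : (1 <= al)%N) (hbe : (1 <= be)%N).
Let g : R := gamma (al, be).

Lemma gam_eq : g ^+ 2 = al%:R * g + be%:R.
Proof.
rewrite /g /gamma /=.
set s := Num.sqrt _.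
have hs : s ^+ 2 = al%:R ^+ 2 + 4 * be%:R :> R.
  by rewrite sqr_sqrtr // addr_ge0 // mulr_ge0.
apply/eqP; rewrite -subr_eq0.
have -> : ((al%:R + s) / 2) ^+ 2 - (al%:R * ((al%:R + s) / 2) + be%:R) =
   (s ^+ 2 - (al%:R ^+ 2 + 4 * be%:R)) / 4 :> R by field.
by rewrite hs subrr mul0r.
Qed.

Lemma gam_ge_al : al%:R <= g.
Proof.
rewrite /g /gamma /=.
have : al%:R <= Num.sqrt (al%:R ^+ 2 + 4 * be%:R) :> R.
  rewrite -{1}(ger0_norm (ler0n R al)) -sqrtr_sqr ler_sqrt ?lerDl ?addr_ge0 ?mulr_ge0 //.
lra.
Qed.

Lemma gam_le : g <= (al + be)%:R.
Proof.
rewrite /g /gamma /=.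
have : Num.sqrt (al%:R ^+ 2 + 4 * be%:R) <= (al + 2 * be)%:R :> R.
  rewrite -(ger0_norm (ler0n R (al + 2 * be))) -sqrtr_sqr ler_sqrt; last first.
    by rewrite exprn_ge0.
  have ha : 1 <= al%:R :> R by rewrite ler1n.
  have hb : 1 <= be%:R :> R by rewrite ler1n.
  rewrite natrD natrM; nra.
rewrite natrD natrM natrD; lra.
Qed.

Lemma gam_ge1 : 1 <= g.
Proof. apply: le_trans gam_ge_al; rewrite ler1n //. Qed.

Lemma gam_gt1 : 1 < g.
Proof.
have h := gam_eq; have h1 := gam_ge_al.
have hb : 1 <= be%:R :> R by rewrite ler1n.
have ha : 1 <= al%:R :> R by rewrite ler1n.
rewrite expr2 in h; nra.
Qed.

Lemma gam_sq_ge_be : be%:R <= g ^+ 2.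
Proof.
rewrite gam_eq lerDr; apply: mulr_ge0 => //; apply: le_trans (gam_ge1) => //.
Qed.

Lemma rec_lower (f : nat -> nat) (c : R) :
  (forall j, f j.+2 = al * f j.+1 + be * f j)%N ->
  c <= (f 0%N)%:R -> c * g <= (f 1%N)%:R -> forall j, c * g ^+ j <= (f j)%:R.
Proof.
move=> hf h0 h1 j.
suff: c * g ^+ j <= (f j)%:R /\ c * g ^+ j.+1 <= (f j.+1)%:R by case.
elim: j => [|j [IH1 IH2]]; first by rewrite expr0 mulr1 expr1.
split => //; rewrite hf natrD !natrM.
have -> : c * g ^+ j.+2 = al%:R * (c * g ^+ j.+1) + be%:R * (c * g ^+ j).
  have e : g ^+ j.+2 = al%:R * g ^+ j.+1 + be%:R * g ^+ j.
    by rewrite !exprS mulrA -expr2 gam_eq; ring.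
  by rewrite e; ring.
by apply: lerD; apply: ler_wpM2l.
Qed.

Lemma rec_upper (f : nat -> nat) (c : R) :
  (forall j, f j.+2 = al * f j.+1 + be * f j)%N ->
  (f 0%N)%:R <= c -> (f 1%N)%:R <= c * g -> forall j, (f j)%:R <= c * g ^+ j.
Proof.
move=> hf h0 h1 j.
suff: (f j)%:R <= c * g ^+ j /\ (f j.+1)%:R <= c * g ^+ j.+1 by case.
elim: j => [|j [IH1 IH2]]; first by rewrite expr0 mulr1 expr1.
split => //; rewrite hf natrD !natrM.
have -> : c * g ^+ j.+2 = al%:R * (c * g ^+ j.+1) + be%:R * (c * g ^+ j).
  have e : g ^+ j.+2 = al%:R * g ^+ j.+1 + be%:R * g ^+ j.
    by rewrite !exprS mulrA -expr2 gam_eq; ring.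
  by rewrite e; ring.
by apply: lerD; apply: ler_wpM2l.
Qed.


Lemma G_lower j : g ^+ j <= g * (wp al be 1 1 j)%:R.
Proof.
have g1 := gam_ge1.
have g0 : 0 < g by apply: lt_le_trans g1.
have := @rec_lower (wp al be 1 1) g^-1 (wpSS al be 1 1) _ _ j.
rewrite wp0 wp1 mulVf ?gt_eqF // invr_le1 ?unitfE ?gt_eqF // => /(_ g1 (lexx _)).
by rewrite -(ler_pM2l g0) mulrA mulfV ?gt_eqF // mul1r.
Qed.

Lemma W_lower a1 a2 j : (1 <= a1)%N -> (1 <= a2)%N -> g ^+ j <= g * (wp al be a1 a2 j)%:R.
Proof.
move=> h1 h2; apply: (le_trans (G_lower j)); apply: ler_wpM2l.
  by apply: le_trans gam_ge1.
by rewrite ler_nat; apply: wp_mono.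
Qed.

Lemma U_lower i : g ^+ i <= g * (wp al be 1 0 i.+2)%:R.
Proof.
apply: (le_trans (G_lower i)); apply: ler_wpM2l; first by apply: le_trans gam_ge1.
rewrite ler_nat wpU_S wpV_S (wp_lin al be 1 1).
set U := wp al be 1 0 i; set V := wp al be 0 1 i.
have h1 : (V <= al * V)%N by rewrite leq_pmull.
have h2 : (U + al * V <= be * (U + al * V))%N by rewrite leq_pmull.
lia.
Qed.

Lemma V_lower i : g ^+ i <= g * (wp al be 0 1 i.+2)%:R.
Proof.
apply: (le_trans (y := g * (wp al be 1 1 i.+1)%:R)).
  apply: le_trans (G_lower i.+1).
  by rewrite exprS ler_peMl ?exprn_ge0 ?gam_ge1 //; apply: le_trans gam_ge1.
apply: ler_wpM2l; first by apply: le_trans gam_ge1.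
rewrite ler_nat (wpV_S al be i.+1) (wp_lin al be 1 1).
set U := wp al be 1 0 i.+1; set V := wp al be 0 1 i.+1.
have h1 : (V <= al * V)%N by rewrite leq_pmull.
lia.
Qed.

Lemma U_upper j : (wp al be 1 0 j)%:R <= g ^+ j.
Proof.
have := @rec_upper (wp al be 1 0) 1 (wpSS al be 1 0) _ _ j.
rewrite wp0 wp1 mul1r mul1r; apply => //; rewrite ?ler0n //; by apply: le_trans gam_ge1.
Qed.

Lemma V_upper j : (wp al be 0 1 j)%:R <= g ^+ j.
Proof.
have := @rec_upper (wp al be 0 1) 1 (wpSS al be 0 1) _ _ j.
rewrite wp0 wp1 mul1r mul1r; apply => //; rewrite ?ler0n ?gam_ge1 //.
Qed.

End Gam.

Lemma pow_ge_lin (R : realType) (x : R) : 2 <= x -> forall i : nat, i%:R <= x ^+ i.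
Proof.
move=> hx; elim => [|i IH]; first by rewrite expr0 ler01.
have h0 : 0 <= i%:R :> R by [].
rewrite exprS -natr1.
have h1 : 1 <= x ^+ i by rewrite exprn_ege1 // (le_trans _ hx) // ler1n.
have h2 : 0 <= (x - 2) * x ^+ i by rewrite mulr_ge0 // ?subr_ge0 // (le_trans _ h1).
nra.
Qed.

Lemma box_out (R : realType) (a0 b0 a b : nat) :
  (0 < a0)%N -> (0 < b0)%N -> (0 < a)%N -> (0 < b)%N ->
  ~~ ((a <= (a0 + b0) ^ 3) && (b <= ((a0 + b0) ^ 3) ^ 2))%N ->
  (gamma (a0, b0) : R) ^+ 3 <= gamma (a, b).
Proof.
move=> h1 h2 h3 h4 hout.
have g0 : 0 <= (gamma (a0, b0) : R) by exact: (le_trans ler01 (gam_ge1 R _ _ h1)).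
have hg := gam_le R a0 b0 h1 h2.
have hA : (gamma (a0, b0) : R) ^+ 3 <= ((a0 + b0) ^ 3)%N%:R.
  by rewrite natrX; apply: lerXn2r => //; rewrite nnegrE.
case/nandP: hout; rewrite -ltnNge => hlt.
  apply: (le_trans hA); apply: le_trans (gam_ge_al R a b).
  by rewrite ler_nat ltnW.
have hB : ((gamma (a0, b0) : R) ^+ 3) ^+ 2 <= (gamma (a, b)) ^+ 2.
  apply: le_trans (gam_sq_ge_be R a b h3).
  apply: le_trans (_ : (((a0 + b0) ^ 3) ^ 2)%N%:R <= _); last by rewrite ler_nat ltnW.
  by rewrite natrX; apply: lerXn2r => //; rewrite nnegrE ?exprn_ge0.
have gq0 : 0 <= (gamma (a, b) : R) by exact: (le_trans ler01 (gam_ge1 R _ _ h3)).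
move: hB; rewrite ler_pXn2r // nnegrE ?exprn_ge0 //.
Qed.

Lemma count_le (P : nat -> Prop) N :
  (\sum_(1 <= i < N.+1 | `[< P i >]) 1 <= N)%N.
Proof.
rewrite big_mkcond /=.
apply: leq_trans (_ : (\sum_(1 <= i < N.+1) 1 <= N)%N).
  by apply: leq_sum => i _; case: ifP.
by rewrite sum_nat_const_nat subn1 muln1.
Qed.

Lemma count_leM N M : (\sum_(1 <= n < N.+1) (n <= M)%N <= M)%N.
Proof.
suff: (\sum_(1 <= n < N.+1) (n <= M)%N = minn N M)%N by move=> ->; apply: geq_minr.
elim: N => [|N IH]; first by rewrite big_geq // min0n.
rewrite big_nat_recr //= IH.
case: (leqP N.+1 M) => h /=; lia.
Qed.

Lemma pow_e3 (R : realType) (g : R) i : (g ^+ 3) ^+ i.+1 = g ^+ 3 * (g ^+ 2) ^+ i * g ^+ i.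
Proof.
rewrite -(exprM g 3 i.+1) -(exprM g 2 i) -exprD -exprD.
rewrite (_ : (3 * i.+1 = 3 + 2 * i + i)%N) //; lia.
Qed.

Lemma pow_e4 (R : realType) (g : R) i : g ^+ 4 * (g ^+ 2) ^+ i = g ^+ i.+2 * g ^+ i.+2.
Proof.
rewrite -(exprM g 2 i) -!exprD.
rewrite (_ : (4 + 2 * i = i.+2 + i.+2)%N) //; lia.
Qed.

Lemma one_le3 (a b : bool) (s : nat) : b \/ a \/ (0 < s)%N -> (1 <= a + b + s)%N.
Proof. case: a; case: b => //=; case => [//|[//|]]; lia. Qed.

Lemma pos_from_lower (R : realType) (x : R) (n i : nat) :
  0 < x -> x ^+ i <= x * n%:R -> (0 < n)%N.
Proof.
move=> x0 h; rewrite lt0n; apply/negP => /eqP e; move: h; rewrite e mulr0.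
by rewrite leNgt exprn_gt0.
Qed.

Lemma natdiv_le (R : realType) (n u : nat) : (0 < u)%N -> (n %/ u)%:R <= n%:R / u%:R :> R.
Proof.
move=> hu; rewrite ler_pdivlMr ?ltr0n // -natrM ler_nat; exact: leq_divM.
Qed.

Lemma real_bound (R : realType) (N U V c X d : R) : 0 < N -> 0 < U -> 0 < V -> 0 < c ->
  0 <= d -> X <= c ^+ 2 * (U * V) -> N * c ^+ 2 <= d * X -> (N / U) * (N / V) <= d * N.
Proof.
move=> N0 U0 V0 c0 d0 h1 h2.
have UV0 : 0 < U * V by rewrite mulr_gt0.
have c2 : 0 < c ^+ 2 by rewrite exprn_gt0.
have h3 : N <= d * (U * V).
  rewrite -(ler_pM2r c2); apply: le_trans h2 _.
  rewrite -mulrA; apply: ler_wpM2l => //; by rewrite mulrC.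
have -> : (N / U) * (N / V) = N * N / (U * V) by field; rewrite ?gt_eqF.
rewrite ler_pdivrMr // -mulrA mulrCA ler_pM2l //.
Qed.

Lemma core (R : realType) (T : set (nat * nat)) (a0 b0 : nat) (eps : R) :
  valid T -> T (a0, b0) ->
  (forall q, T q -> gamma (a0, b0) <= gamma q :> R) ->
  (forall q, T q -> gamma q = gamma (a0, b0) :> R -> q = (a0, b0)) ->
  0 < eps -> eps <= 1 ->
  \forall N \near \oo, (1 - 2 * eps) * N%:R <= (count_E T [set (a0, b0)] N)%:R.
Proof.
move=> vT Tp hmin huniq e0 e1.
have [h1 h2 hcop] := vT _ Tp; rewrite /= in h1 h2 hcop.
pose g : R := gamma (a0, b0).
have g1 : 1 < g := gam_gt1 R a0 b0 h1 h2.
have g0 : 0 < g by apply: lt_trans g1.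
have g2 : 2 <= g ^+ 2.
  rewrite /g gam_eq; have := gam_ge1 R a0 b0 h1.
  have : 1 <= b0%:R :> R by rewrite ler1n.
  have : 1 <= a0%:R :> R by rewrite ler1n.
  rewrite -/g; nra.
pose A := ((a0 + b0) ^ 3)%N. pose B := (A ^ 2)%N.
pose I := ('I_A.+1 * 'I_B.+1)%type.
pose qx (x : I) : nat * nat := (nat_of_ord x.1, nat_of_ord x.2).
pose K : R := #|{: I}|%:R.
have K0 : 0 < K by rewrite /K ltr0n card_prod !card_ord.
pose d := eps / K.
have d0 : 0 < d by rewrite divr_gt0.
have ev_in : \forall i \near \oo, forall x : I, T (qx x) -> qx x <> (a0, b0) ->
    g ^+ 6 * (gamma (qx x)) ^+ 2 * (g ^+ 2) ^+ i <= eps * d * ((gamma (qx x)) ^+ 2) ^+ i.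
  apply: filter_forall => x.
  case: (pselect (T (qx x) /\ qx x <> (a0, b0))) => [[Tq nq]|nh]; last first.
    by apply: nearW => i Tq nq; exfalso; apply: nh.
  pose c : R := gamma (qx x).
  have gc : g < c.
    rewrite lt_neqAle (hmin _ Tq) andbT; apply/eqP => e; apply: nq; apply: huniq => //; rewrite -e.
  have c0 : 0 < c by apply: lt_trans gc.
  have z1 : `|g ^+ 2 / c ^+ 2| < 1.
    rewrite ger0_norm ?divr_ge0 ?exprn_ge0 ?ltW //.
    rewrite ltr_pdivrMr ?exprn_gt0 // mul1r ltr_pXn2r ?nnegrE ?ltW //.
  have P : 0 < g ^+ 6 * c ^+ 2 by rewrite mulr_gt0 ?exprn_gt0.
  have pos : 0 < eps * d / (g ^+ 6 * c ^+ 2) by rewrite divr_gt0 // mulr_gt0.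
  move/cvgrPdist_le : (cvg_expr z1) => /(_ _ pos) H.
  apply: filterS H => i /=; rewrite sub0r normrN ger0_norm; last first.
    by rewrite exprn_ge0 // divr_ge0 // exprn_ge0 // ltW.
  rewrite expr_div_n ler_pdivrMr ?exprn_gt0 // => hz _ _.
  have -> : eps * d * (c ^+ 2) ^+ i = g ^+ 6 * c ^+ 2 * (eps * d / (g ^+ 6 * c ^+ 2) * (c ^+ 2) ^+ i).
    by field; rewrite !gt_eqF.
  by apply: ler_wpM2l => //; apply: ltW.
have ev_out : \forall i \near \oo, g ^+ 3 <= eps * g ^+ i.
  have z1 : `|g^-1| < 1 by rewrite ger0_norm ?invr_ge0 ?ltW // invf_lt1.
  have pos : 0 < eps / g ^+ 3 by rewrite divr_gt0 ?exprn_gt0.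
  move/cvgrPdist_le : (cvg_expr z1) => /(_ _ pos) H.
  apply: filterS H => i /=; rewrite sub0r normrN ger0_norm; last first.
    by rewrite exprn_ge0 // invr_ge0 ltW.
  rewrite exprVn -[X in X <= _]div1r ler_pdivrMr ?exprn_gt0 //.
  by rewrite mulrAC ler_pdivlMr ?exprn_gt0 // mul1r.
case: (filterI ev_in ev_out) => i0 _ hi0.
have evN := filterI (nbhs_infty_ger (g ^+ 4 * (g ^+ 2) ^+ i0 / eps)) (nbhs_infty_gt 0).
case: evN => N0 _ hN0; exists N0 => // N /= /hN0 [hN hN1].
pose S := fun i : nat => g ^+ 4 * (g ^+ 2) ^+ i <= eps * N%:R.
have Si0 : S i0.
  by rewrite /S [eps * _]mulrC -ler_pdivrMr.
have exS : exists i, S i by exists i0.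
have bndS : forall i, S i -> (i <= N)%N.
  move=> i Si; rewrite -(ler_nat R); apply: (le_trans (@pow_ge_lin R _ g2 i)).
  apply: le_trans (_ : g ^+ 4 * (g ^+ 2) ^+ i <= _).
    by rewrite ler_peMl ?exprn_ge0 ?exprn_ege1 // ltW.
  apply: le_trans Si _; rewrite ler_piMl //.
case: (ex_maxnP exS bndS) => i Si imax.
have ii0 : (i0 <= i)%N by apply: imax.
have Nlt : eps * N%:R < g ^+ 6 * (g ^+ 2) ^+ i.
  rewrite ltNge; apply/negP => h.
  have : S i.+1 by rewrite /S [(g ^+ 2) ^+ i.+1]exprS mulrA -exprD.
  by move/imax; rewrite ltnn.
have [Hin Hout] := hi0 i ii0.
pose j := i.+2.
pose U' := wp a0 b0 1 0 j. pose V' := wp a0 b0 0 1 j.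
pose M := (U' * V')%N.
have U'0 : (0 < U')%N := @pos_from_lower R _ _ _ g0 (U_lower R a0 b0 h1 h2 i).
have V'0 : (0 < V')%N := @pos_from_lower R _ _ _ g0 (V_lower R a0 b0 h1 h2 i).
have hitp : forall n, (M < n)%N -> hit (a0, b0) n j.
  move=> n hn.
  have [a1 [a2 [b1 b2 e]]] := @sylvester U' V' n U'0 V'0 (wp_coprime a0 b0 hcop j isT) hn.
  exists a1, a2; split => //; rewrite wp_lin; exact: e.
have Mle : M%:R <= eps * N%:R.
  rewrite natrM; apply: le_trans Si.
  have -> : g ^+ 4 * (g ^+ 2) ^+ i = g ^+ j * g ^+ j.
    exact: pow_e4.
  by apply: ler_pM => //; [apply: U_upper | apply: V_upper].
have out : forall q, T q -> ~~ ((q.1 <= A) && (q.2 <= B))%N ->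
    forall n, (n <= N)%N -> ~ hit q n j.
  move=> [a b] Tq hq n hn [a1 [a2 [b1 b2 e]]].
  have [q1 q2 _] := vT _ Tq; rewrite /= in q1 q2 e hq.
  have gq := @box_out R a0 b0 a b h1 h2 q1 q2 hq.
  have hw := W_lower R a b q1 a1 a2 j b1 b2.
  rewrite e in hw.
  set c := gamma (a, b) in gq hw.
  have c0 : 0 < c by apply: lt_le_trans gq; rewrite exprn_gt0.
  have hc : c ^+ i.+1 <= n%:R.
    by move: hw; rewrite /j exprS ler_pM2l.
  have hg3 : (g ^+ 3) ^+ i.+1 <= c ^+ i.+1.
    have Hx : g ^+ 3 \in Num.nneg by rewrite nnegrE exprn_ge0 // ltW.
    have Hy : c \in Num.nneg by rewrite nnegrE ltW.
    exact: (@lerXn2r R i.+1 (g ^+ 3) c Hx Hy gq).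
  have hnN : n%:R <= N%:R :> R by rewrite ler_nat.
  have e3 : (g ^+ 3) ^+ i.+1 = g ^+ 3 * (g ^+ 2) ^+ i * g ^+ i.
    exact: pow_e3.
  have X0 : 0 <= g ^+ 3 * (g ^+ 2) ^+ i by rewrite mulr_ge0 ?exprn_ge0 // ltW.
  have h6 : g ^+ 6 * (g ^+ 2) ^+ i <= eps * (g ^+ 3) ^+ i.+1.
    rewrite e3.
    have -> : g ^+ 6 * (g ^+ 2) ^+ i = (g ^+ 3 * (g ^+ 2) ^+ i) * g ^+ 3.
      by rewrite [RHS]mulrAC -exprD.
    have -> : eps * (g ^+ 3 * (g ^+ 2) ^+ i * g ^+ i) = (g ^+ 3 * (g ^+ 2) ^+ i) * (eps * g ^+ i).
      by ring.
    by apply: ler_wpM2l.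
  have : eps * N%:R < eps * (g ^+ 3) ^+ i.+1 by apply: lt_le_trans Nlt h6.
  rewrite ltr_pM2l // ltNge => /negP; apply.
  by apply: le_trans hg3 _; apply: le_trans hc hnN.
pose F (x : I) (n : nat) : bool :=
  `[< T (qx x) /\ qx x <> (a0, b0) >] && `[< hit (qx x) n j >].
have key : (N <= count_E T [set (a0, b0)] N + M + \sum_(x : I) \sum_(1 <= n < N.+1) F x n)%N.
  rewrite /count_E big_mkcond /= [X in (_ <= _ + X)%N]exchange_big /=.
  have hNs : N = (\sum_(1 <= n < N.+1) 1)%N by rewrite sum_nat_const_nat subn1 muln1.
  apply: (@leq_trans (\sum_(1 <= n < N.+1) ((if `[< in_E T [set (a0, b0)] n >] then 1 else 0)
                       + (n <= M)%N + \sum_(x : I) F x n))%N).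
    rewrite {1}hNs big_nat [X in (_ <= X)%N]big_nat; apply: leq_sum => n /andP [n1 nN].
    have -> : (if `[< in_E T [set (a0, b0)] n >] then 1 else 0)%N = `[< in_E T [set (a0, b0)] n >] by case: ifP.
    apply: one_le3.
    case: (leqP n M) => hnM; first by left.
    right.
    case: (pselect (exists q, T q /\ q <> (a0, b0) /\ hit q n j)) => [[[qa qb] [Tq [nq hq]]]|hno]; last first.
      left; apply/asboolP; apply: (good_inE vT Tp n1 (hitp n hnM)) => q Tq nq hq; apply: hno.
      by exists q.
    right.
    have inb : ((qa <= A) && (qb <= B))%N.
      by apply/negPn/negP => hb; apply: (out (qa, qb) Tq hb n _ hq); rewrite -ltnS.
    case/andP: inb => hqa hqb.
    pose x : I := (Ordinal (hqa : (qa < A.+1)%N), Ordinal (hqb : (qb < B.+1)%N)).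
    have qxe : qx x = (qa, qb) by [].
    rewrite (bigD1 x) //= /F qxe (asboolT (conj Tq nq)) (asboolT hq) //.
  rewrite !big_split /=; apply: leq_add => //; apply: leq_add => //; exact: count_leM.
have Npos : 0 < N%:R :> R by rewrite ltr0n.
have termb : forall x : I, ((\sum_(1 <= n < N.+1) F x n)%N)%:R <= d * N%:R.
  move=> x.
  case: (pselect (T (qx x) /\ qx x <> (a0, b0))) => [[Tq nq]|nh]; last first.
    rewrite big1 => [|n _]; last by rewrite /F asboolF.
    by rewrite mulr_ge0 // ltW.
  have [q1 q2 _] := vT _ Tq.
  pose c : R := gamma (qx x).
  have gc : g <= c by apply: hmin.
  have c0 : 0 < c by apply: lt_le_trans gc.
  pose U := wp (qx x).1 (qx x).2 1 0 j. pose V := wp (qx x).1 (qx x).2 0 1 j.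
  have hU := U_lower R (qx x).1 (qx x).2 q1 q2 i.
  have hV := V_lower R (qx x).1 (qx x).2 q1 q2 i.
  have U0 : (0 < U)%N := @pos_from_lower R _ _ _ c0 hU.
  have V0 : (0 < V)%N := @pos_from_lower R _ _ _ c0 hV.
  have Ueq : (\sum_(1 <= n < N.+1) F x n)%N =
     (\sum_(1 <= n < N.+1 | `[< exists a1 a2, [/\ 0 < a1, 0 < a2 & a1 * U + a2 * V = n]%N >]) 1)%N.
    rewrite [RHS]big_mkcond /=; apply: eq_bigr => n _.
    rewrite /F (asboolT (conj Tq nq)) /=.
    rewrite (@asbool_equiv_eq (hit (qx x) n j)
               (exists a1 a2, [/\ 0 < a1, 0 < a2 & a1 * U + a2 * V = n]%N)).
      by case: asboolP.
    split => [[a1 [a2 [b1 b2 e]]]|[a1 [a2 [b1 b2 e]]]]; exists a1, a2; split => //.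
      by rewrite -e (wp_lin _ _ a1 a2 j).
    by rewrite (wp_lin _ _ a1 a2 j); exact: e.
  rewrite Ueq; apply: le_trans (_ : ((N %/ U) * (N %/ V))%N%:R <= _).
    by rewrite ler_nat; apply: cnt_bound.
  rewrite natrM.
  have hUr : 0 < U%:R :> R by rewrite ltr0n.
  have hVr : 0 < V%:R :> R by rewrite ltr0n.
  apply: (le_trans (ler_pM (ler0n _ _) (ler0n _ _) (natdiv_le R N U U0) (natdiv_le R N V V0))).
  rewrite -/U -/V.
  apply: (@real_bound R _ _ _ c ((c ^+ 2) ^+ i)) => //; first exact: ltW.
    rewrite exprAC expr2.
    have -> : c ^+ 2 * (U%:R * V%:R) = (c * U%:R) * (c * V%:R) by ring.
    by apply: ler_pM => //; rewrite exprn_ge0 // ltW.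
  have := Hin x Tq nq; rewrite -/c => hin.
  rewrite -(ler_pM2l e0).
  rewrite [X in _ <= X]mulrA; apply: (le_trans (y := g ^+ 6 * c ^+ 2 * (g ^+ 2) ^+ i)); last exact: hin.
  have -> : g ^+ 6 * c ^+ 2 * (g ^+ 2) ^+ i = (g ^+ 6 * (g ^+ 2) ^+ i) * c ^+ 2 by rewrite mulrAC.
  rewrite mulrA; apply: ler_wpM2r; first by rewrite exprn_ge0 // ltW.
  exact: ltW.
have Ssum : \sum_(x : I) ((\sum_(1 <= n < N.+1) F x n)%N)%:R <= eps * N%:R.
  apply: le_trans (_ : \sum_(x : I) d * N%:R <= _).
    by apply: ler_sum => y _; exact: termb.
  rewrite sumr_const -[X in X <= _]mulr_natr (_ : (#|xpredT|%:R : R) = K) // /d.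
  have -> : eps / K * N%:R * K = eps * N%:R by field; rewrite gt_eqF.
  by [].
rewrite -natr_sum in Ssum.
move: key; rewrite -(ler_nat R) !natrD => hk.
lra.
Qed.

Theorem corollary5p3 (R : realType) (T : set (nat * nat)) (p' : nat * nat) :
  valid T ->
  T p' ->
  (forall q, T q -> gamma p' <= gamma q :> R) ->
  (forall q, T q -> gamma q = gamma p' :> R -> q = p') ->
  (fun n : nat => (count_E T [set p'] n)%:R / n%:R : R) @ \oo --> (1 : R).
Proof.
case: p' => a0 b0 vT Tp hmin huniq.
apply/cvgrPdist_le => e e0.
pose eps := e / (e + 2).
have e2 : 0 < e + 2 by rewrite addr_gt0.
have eps0 : 0 < eps by rewrite divr_gt0.
have eps1 : eps <= 1 by rewrite ler_pdivrMr //; lra.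
have eps2 : 2 * eps <= e.
  rewrite /eps mulrA ler_pdivrMr //; nra.
have ev := filterI (@core R T a0 b0 eps vT Tp hmin huniq eps0 eps1) (nbhs_infty_gt 0).
case: ev => N0 _ hN0; exists N0 => // N /= /hN0 [hc hN].
have Npos : 0 < N%:R :> R by rewrite ltr0n.
have cle : (count_E T [set (a0, b0)] N)%:R <= N%:R :> R by rewrite ler_nat count_le.
have h1 : (count_E T [set (a0, b0)] N)%:R / N%:R <= 1 :> R by rewrite ler_pdivrMr // mul1r.
have h2 : 1 - 2 * eps <= (count_E T [set (a0, b0)] N)%:R / N%:R :> R by rewrite ler_pdivlMr.
rewrite ger0_norm ?subr_ge0 //; lra.
Qed.
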